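(* Let $k\in\mathbb{N}$ and let $u=a_1\cdots a_n$ be a word over a finite alphabet $A$ with $x$-coordinates $x_1,\dots,x_n$ (where $x_i$ is the minimal length of an X-ranker reaching position $i$ in $u$). Run the following algorithm: initialize $n_a\gets1$ for all $a\in A$; for $i=n,n-1,\dots,1$: let $c=a_i$; if $x_i+n_c\le k+1$, then set $y_i\gets n_c$, $n_c\gets n_c+1$, and for all $a\in A$ set $n_a\gets\min(n_a,n_c)$; otherwise mark position $i$ for deletion. Let $v$ be the word obtained from $u$ by removing all marked positions. Then $u\sim_k v$.
   Context: $u\sim_k v$ iff $u$ and $v$ have the same scattered subwords of length at most $k$ (a word $b_1\cdots b_m$ is a subword of $w$ if $w=w_0b_1w_1\cdots b_mw_m$). An X-ranker is a nonempty word over $\{\mathsf X_a : a\in A\}$, length = word length; for a word $w$, $\mathsf X_a(w)$ is the smallest $a$-position of $w$ and $r\mathsf X_a(w)$ the smallest $a$-position greater than $r(w)$ (possibly undefined). *)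

(* Defs.v *)
(* Positions in words are 0-indexed. *)
From mathcomp Require Import all_boot.
Set Implicit Arguments. Unset Strict Implicit. Unset Printing Implicit Defensive.

Section Defs.
Variable A : finType.

Definition simk (k : nat) (u v : seq A) : Prop :=
  forall w : seq A, size w <= k -> subseq w u = subseq w v.

Definition next_pos (u : seq A) (s : nat) (a : A) : option nat :=
  let j := s + find (pred1 a) (drop s u) in
  if j < size u then Some j else None.

(* evaluation of an X-ranker X_{a1} X_{a2} ... X_{am} (given as the word
   [:: a1; ...; am] over A) on u: X_{a1}(u) is the smallest a1-position,
   r X_b (u) is the smallest b-position greater than r(u).  The empty
   word is not an X-ranker and is mapped to None. *)
Definition rk_eval (u : seq A) (r : seq A) : option nat :=
  match r with
  | [::] => None
  | a :: r' => foldl (fun o b => obind (fun p => next_pos u p.+1 b) o)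
                     (next_pos u 0 a) r'
  end.

Definition is_xcoord (u : seq A) (i m : nat) : Prop :=
  (exists2 r : seq A, size r = m & rk_eval u r = Some i) /\
  (forall r : seq A, rk_eval u r = Some i -> m <= size r).

(* The deletion algorithm.  State: counters n_a and the keep-flags of the
   already processed suffix.  foldr processes positions n-1, ..., 0. *)
Definition alg_step (k : nat) (x : nat -> nat) (ci : A * nat)
  (st : (A -> nat) * seq bool) : (A -> nat) * seq bool :=
  let (c, i) := ci in
  let (cnt, ks) := st in
  if x i + cnt c <= k.+1 then
    let nc := (cnt c).+1 in
    (fun a => minn (if a == c then nc else cnt a) nc, true :: ks)
  else (cnt, false :: ks).

Definition keep_flags (k : nat) (u : seq A) (x : nat -> nat) : seq bool :=
  (foldr (alg_step k x) (fun _ => 1, [::]) (zip u (iota 0 (size u)))).2.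

Definition alg_output (k : nat) (u : seq A) (x : nat -> nat) : seq A :=
  mask (keep_flags k u x) u.

End Defs.

(* Main.v *)
Require Import Defs.
From mathcomp Require Import all_boot.
From mathcomp Require Import zify.
Set Implicit Arguments. Unset Strict Implicit. Unset Printing Implicit Defensive.

Section Aux.
Variable A : finType.

Fixpoint Fc (s : seq A) : A -> nat :=
  match s with
  | [::] => fun _ => 1
  | d :: s' => fun a => minn (if a == d then (Fc s' d).+1 else Fc s' a) (Fc s' d).+1
  end.


Lemma subseqC (a b : A) w s : subseq (a :: w) (b :: s) =
  if a == b then subseq w s else subseq (a :: w) s.
Proof. by rewrite /=; case: (a == b). Qed.

Lemma propB s : forall c z, subseq z s -> (size z).+1 < Fc s c -> subseq (c :: z) s.
Proof.
elim: s => [|d s IH] c z; first by [].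
rewrite /Fc -/Fc => hz hF.
rewrite subseqC.
have [e|ncd] := eqVneq c d.
- subst c.
  move: hF; rewrite eqxx minnn ltnS => hF.
  case: z hz hF => [|b z] hz hF; first exact: sub0seq.
  move: hz; rewrite subseqC.
  have [e|nbd] := eqVneq b d; last by [].
  subst b. move=> hz. exact: IH.
- move: hF; rewrite leq_min => /andP[h1 h2].
  apply: (IH) => //.
  case: z hz h1 h2 => [|b z] hz h1 h2; first exact: sub0seq.
  move: hz; rewrite subseqC.
  have [e|nbd] := eqVneq b d; last by [].
  subst b. move=> hz. apply: (IH) => //; move: h2 => /=; lia.
by rewrite (negbTE ncd) in h1. Qed.

Lemma split_lem (c : A) s p : forall w, subseq w (p ++ c :: s) ->
  subseq w (p ++ s) \/ exists w1 w2, [/\ w = w1 ++ c :: w2, subseq w1 p,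
     ~~ subseq (rcons w1 c) p & subseq w2 s].
Proof.
elim: p => [|d p IH] [|b w] h; try by left; rewrite sub0seq.
- move: h; rewrite cat0s subseqC.
  have [e|nbc] := eqVneq b c => h.
  + subst b. right. exists [::], w. by split.
  + by left.
- move: h; rewrite cat_cons subseqC.
  have [e|nbd] := eqVneq b d => h.
  + subst b. case: (IH _ h) => [h'|[w1 [w2 [-> h1 h2 h3]]]].
    * left. by rewrite cat_cons subseqC eqxx.
    * right. exists (d :: w1), w2. by rewrite rcons_cons !subseqC eqxx.
  + case: (IH _ h) => [h'|[w1 [w2 [e h1 h2 h3]]]].
    * left. by rewrite cat_cons subseqC (negbTE nbd).
    * right. exists w1, w2. split => //.
      -- apply: subseq_trans h1 _. exact: subseq_cons.
      -- case: w1 e h1 h2 => [|b1 w1] /= [eb ew]; subst.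
         ++ by rewrite (negbTE nbd).
         ++ by rewrite (negbTE nbd).
Qed.

Variable u : seq A.

Definition fstep (o : option nat) (b : A) := obind (fun p => next_pos u p.+1 b) o.

Definition K (s : nat) (w : seq A) : option nat :=
  match w with [::] => None | a :: r => foldl fstep (next_pos u s a) r end.

Lemma foldl_None r : foldl fstep None r = None.
Proof. by elim: r. Qed.

Lemma NP s x a z : drop s u = x ++ a :: z -> a \notin x -> next_pos u s a = Some (s + size x).
Proof.
move=> hd hx. rewrite /next_pos hd find_cat.
have -> : has (pred1 a) x = false.
  apply/negbTE. apply/hasPn => y hy /=. apply/eqP => e. subst. by rewrite hy in hx.
rewrite /= eqxx addn0.
have : size (drop s u) = size x + (size z).+1 by rewrite hd size_cat.
rewrite size_drop => e.
have -> : s + size x < size u by lia.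
done.
Qed.

Lemma key c t w : forall q p', u = q ++ p' ++ c :: t -> subseq w p' ->
  ~~ subseq (rcons w c) p' -> K (size q) (rcons w c) = Some (size q + size p').
Proof.
elim: w => [|a w IH] q p' hu hw hn /=.
- rewrite (@NP _ p' c t) //; first by rewrite hu drop_size_cat.
  apply/negP => hc. move: hn. by rewrite /= sub1seq hc.
- have ha : a \in p' by apply: (mem_subseq hw); rewrite inE eqxx.
  move: (cat_take_drop (index a p') p') => ep.
  set x := take _ _ in ep.
  have hdr : drop (index a p') p' = a :: drop (index a p').+1 p'.
    by rewrite (drop_nth a) ?index_mem // nth_index.
  rewrite hdr in ep. set y := drop _.+1 _ in ep.
  have hax : a \notin x.
    rewrite /x. apply/negP => /index_ltn. by rewrite ltnn.
  clearbody x y.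
  have sub_eq : forall v, subseq (a :: v) p' = subseq v y.
    move=> v. rewrite -ep. elim: (x) hax => [|b x' IHx]; first by rewrite cat0s subseqC eqxx.
    rewrite inE negb_or => /andP[hb hx']. rewrite cat_cons subseqC (negbTE hb). exact: IHx.
  have hnp : next_pos u (size q) a = Some (size q + size x).
    apply: (@NP (size q) x a (y ++ c :: t)) => //.
    by rewrite hu drop_size_cat // -cat_cons catA ep.
  rewrite hnp.
  have hu' : u = (q ++ x ++ [:: a]) ++ y ++ c :: t.
    by rewrite hu -{1}ep -!catA.
  have IH' := IH _ _ hu'.
  have es : size (q ++ x ++ [:: a]) = (size q + size x).+1.
    rewrite !size_cat /=. lia.
  rewrite es in IH'.
  have fold_eq : forall j r, r != [::] -> foldl fstep (Some j) r = K j.+1 r.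
    by move=> j [|b r].
  rewrite fold_eq; last by case: (w).
  rewrite IH'.
  + congr Some. have : size p' = size x + (size y).+1 by rewrite -ep size_cat. lia.
  + by rewrite -sub_eq.
  + by move: hn; rewrite rcons_cons sub_eq.
Qed.

Lemma rkK r : rk_eval u r = K 0 r.
Proof. by case: r. Qed.

Lemma del_lem k p c t s X : u = p ++ c :: t ->
  (forall r, rk_eval u r = Some (size p) -> X <= size r) ->
  k.+1 < X + Fc s c -> simk k (p ++ c :: s) (p ++ s).
Proof.
move=> hu hX hk w hw. apply/idP/idP => h.
- case: (split_lem h) => // [[w1 [w2 [ew h1 h2 h3]]]].
  have hK := @key c t w1 [::] p hu h1 h2.
  rewrite /= add0n -rkK in hK.
  have := hX _ hK. rewrite size_rcons => hX1.
  have hsz : size w = size w1 + (size w2).+1 by rewrite ew size_cat.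
  have hc : subseq (c :: w2) s.
    apply: propB => //. move: hX1 hsz hw hk. generalize (Fc s c) => F. clear. set n2 := size w2. set n1 := size w1. set n := size w. lia.
  subst w. exact: cat_subseq h1 hc.
- apply: subseq_trans h _. exact: cat_subseq (subseq_refl p) (subseq_cons s c).
Qed.

End Aux.

Section Main.
Variables (A : finType) (k : nat) (u : seq A) (x : nat -> nat).

Definition st (t : seq A) (m : nat) :=
  foldr (alg_step k x) (fun _ => 1, [::]) (zip t (iota m (size t))).

Lemma st_inv (hx : forall i, i < size u -> is_xcoord u i (x i)) t :
  forall p, u = p ++ t ->
  let: (cnt, ks) := st t (size p) in
  [/\ size ks = size t, (forall a, cnt a = Fc (mask ks t) a) &
      simk k u (p ++ mask ks t)].
Proof.
elim: t => [|c t IH] p hu.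
- rewrite /st /= -hu. split; [done | by move=> _ | by move=> w _].
- have hu' : u = rcons p c ++ t by rewrite cat_rcons.
  have := IH _ hu'. rewrite size_rcons.
  have -> : st (c :: t) (size p) = alg_step k x (c, size p) (st t (size p).+1) by [].
  case: (st t (size p).+1) => cnt ks [hs hc hsim].
  rewrite /alg_step.
  case: ifP => hle.
  + split => /=; first by rewrite hs.
    * move=> a. by rewrite !hc.
    * by rewrite -cat_rcons.
  + split => /=; first by rewrite hs.
    * exact: hc.
      move=> w hw.
      rewrite (hsim w hw) cat_rcons.
      have hp : size p < size u by rewrite hu size_cat /=; lia.
      have [_ hmin] := hx _ hp.
      have hk : k.+1 < x (size p) + Fc (mask ks t) c.
        rewrite -hc. move/negbT: hle. by rewrite -ltnNge.
      exact: (del_lem hu hmin hk hw).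
Qed.

End Main.

Theorem lemma16 (A : finType) (k : nat) (u : seq A) (x : nat -> nat) :
  (forall i, i < size u -> is_xcoord u i (x i)) ->
  simk k u (alg_output k u x).
Proof.
move=> hx. have := @st_inv A k u x hx u [::] erefl.
rewrite /alg_output /keep_flags.
change (foldr (alg_step k x) (fun _ => 1, [::]) (zip u (iota 0 (size u)))) with (st k x u 0).
case: (st k x u 0) => cnt ks [_ _ h]. exact: h.
Qed.
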